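(* For every $n\geq1$, the RBM variety $V^1_n$ coincides with the first secant variety (the Zariski closure of the union of all secant lines) of the Segre embedding of $(\mathbb{P}^1)^n$ into $\mathbb{P}^{2^n-1}$, and the tropical RBM variety $TV^1_n$ is the tropicalization of that secant variety.
   Context: The RBM model $M^1_n$ is the subset of the open simplex $\Delta_{2^n-1}$ consisting of all vectors $(p(v))_{v\in\{0,1\}^n}$ with $p(v)=\frac1Z\beta_1^{v_1}\cdots\beta_n^{v_n}(1+\gamma\,\omega_1^{v_1}\cdots\omega_n^{v_n})$, where all parameters range over $\mathbb{R}_{>0}$ and $Z$ normalizes the coordinates to sum to one. The RBM variety $V^1_n$ is the Zariski closure of $M^1_n$ in the complex projective space $\mathbb{P}^{2^n-1}$ (coordinates indexed by $v\in\{0,1\}^n$), and the tropical RBM variety $TV^1_n\subseteq\mathbb{R}^{2^n}/\mathbb{R}(1,\dots,1)$ is the tropicalization of $V^1_n$, i.e. the intersection of the tropical hypersurfaces of all polynomials vanishing on $V^1_n$. The Segre embedding sends $((x_0^{(1)}:x_1^{(1)}),\dots,(x_0^{(n)}:x_1^{(n)}))$ to the point with coordinates $\prod_i x^{(i)}_{v_i}$, $v\in\{0,1\}^n$. *)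

(* Defs.v *)
From HB Require Import structures.
From mathcomp Require Import all_boot all_order all_algebra.
From mathcomp Require Import Rstruct.
From mathcomp Require Import mpoly.
From mathcomp Require Import complex.
From Stdlib Require Import Reals.

Set Implicit Arguments.
Unset Strict Implicit.
Unset Printing Implicit Defensive.

Import Order.TTheory GRing.Theory Num.Theory.
Local Open Scope ring_scope.

Definition bitvec (n : nat) := {ffun 'I_n -> bool}.

Definition ncoord (n : nat) : nat := #|{: bitvec n}|.

Definition CC : fieldType := R[i].
Definition toC (x : R) : CC := (x%:C)%C.

Definition cvec (n : nat) := bitvec n -> CC.

Definition nonzero_vec n (x : cvec n) : Prop := exists v, x v != 0.

(* Polynomials with complex coefficients in the 2^n coordinates p(v);
   the variable 'X_i corresponds to the coordinate v = enum_val i. *)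
Definition cpoly (n : nat) := {mpoly CC[ncoord n]}.

Definition peval n (f : cpoly n) (x : cvec n) : CC :=
  f.@[fun i : 'I_(ncoord n) => x (enum_val i)].

Definition homogeneous n (f : cpoly n) : Prop :=
  exists d : nat, forall m, m \in msupp f -> mdeg m = d.

(* A subset of P^{2^n-1} is represented by its affine cone (a set of
   nonzero vectors closed under nonzero scaling). *)
Definition zclosure n (S : cvec n -> Prop) : cvec n -> Prop :=
  fun x => nonzero_vec x /\
    forall f : cpoly n, homogeneous f ->
      (forall y, S y -> peval f y = 0) -> peval f x = 0.

Definition rbm_unnorm n (beta omega : 'I_n -> R) (gamma : R) (v : bitvec n) : R :=
  (\prod_(i < n) beta i ^+ v i) * (1 + gamma * \prod_(i < n) omega i ^+ v i).

Definition rbm_point n (beta omega : 'I_n -> R) (gamma : R) (v : bitvec n) : R :=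
  rbm_unnorm beta omega gamma v / (\sum_(u : bitvec n) rbm_unnorm beta omega gamma u).

Definition rbm_model n (p : bitvec n -> R) : Prop :=
  exists (beta omega : 'I_n -> R) (gamma : R),
    (forall i, 0 < beta i) /\ (forall i, 0 < omega i) /\ 0 < gamma /\
    p = rbm_point beta omega gamma.

Definition cone_of_real n (S : (bitvec n -> R) -> Prop) : cvec n -> Prop :=
  fun x => exists (p : bitvec n -> R) (c : CC),
    S p /\ c != 0 /\ x = (fun v => c * toC (p v)).

Definition rbm_variety n : cvec n -> Prop := zclosure (cone_of_real (@rbm_model n)).

Definition segre_cone n (x : cvec n) : Prop :=
  exists a : 'I_n -> CC * CC,
    (forall i, a i != (0, 0)) /\
    x = (fun v => \prod_(i < n) (if v i then (a i).2 else (a i).1)).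

Definition secant_union n (x : cvec n) : Prop :=
  nonzero_vec x /\
  exists s t : cvec n, segre_cone s /\ segre_cone t /\
    ~ (exists c : CC, forall v, s v = c * t v) /\
    exists lambda mu : CC, x = (fun v => lambda * s v + mu * t v).

Definition secant_variety n : cvec n -> Prop := zclosure (@secant_union n).

Definition wdot n (w : bitvec n -> R) (m : 'X_{1.. ncoord n}) : R :=
  \sum_(i < ncoord n) w (enum_val i) * (m i)%:R.

Definition trop_hyp n (f : cpoly n) (w : bitvec n -> R) : Prop :=
  f = 0 \/
  exists a b, a \in msupp f /\ b \in msupp f /\ a != b /\
    wdot w a = wdot w b /\
    forall c, c \in msupp f -> wdot w a <= wdot w c.

(* Represented as a
   subset of R^{2^n} (it is invariant under adding multiples of (1,...,1)). *)
Definition tropicalization n (V : cvec n -> Prop) : (bitvec n -> R) -> Prop :=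
  fun w => forall f : cpoly n, (forall x, V x -> peval f x = 0) -> trop_hyp f w.

(* Main.v *)
Require Import Defs.
From HB Require Import structures.
From mathcomp Require Import all_boot all_order all_algebra.
From mathcomp Require Import Rstruct.
From mathcomp Require Import mpoly.
From mathcomp Require Import complex.
From Stdlib Require Import Reals FunctionalExtensionality ClassicalEpsilon.
Set Implicit Arguments.
Unset Strict Implicit.
Unset Printing Implicit Defensive.
Import Order.TTheory GRing.Theory Num.Theory.
Local Open Scope ring_scope.

Lemma toCM (a b : R) : toC (a * b) = toC a * toC b.
Proof. by rewrite /toC rmorphM. Qed.
Lemma toCD (a b : R) : toC (a + b) = toC a + toC b.
Proof. by rewrite /toC rmorphD. Qed.
Lemma toCn k : toC k%:R = k%:R.
Proof. by rewrite /toC rmorph_nat. Qed.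
Lemma toC_inj : injective toC.
Proof. by move=> x y /complexI. Qed.

Lemma poly_pos0 (Q : {poly CC}) :
  (forall r : R, 0 < r -> Q.[toC r] = 0) -> Q = 0.
Proof.
move=> H; apply: (@roots_geq_poly_eq0 _ Q (mkseq (fun i => toC (i.+1)%:R) (size Q))).
- apply/allP => x /mapP [i _ ->]; apply/rootP; apply: H; by rewrite ltr0Sn.
- rewrite map_inj_uniq ?iota_uniq // => i j /toC_inj /eqP; rewrite eqr_nat eqSS.
  by move/eqP.
- by rewrite size_mkseq.
Qed.
Definition ispz (h : CC -> CC) := exists Q : {poly CC}, forall z, h z = Q.[z].

Lemma ispz_ext h1 h2 : (forall z, h1 z = h2 z) -> ispz h1 -> ispz h2.
Proof. by move=> E [P HP]; exists P => z; rewrite -E. Qed.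
Lemma ispzC c : ispz (fun _ => c).
Proof. by exists c%:P => z; rewrite hornerC. Qed.
Lemma ispzX : ispz (fun z : CC => z).
Proof. by exists 'X => z; rewrite hornerX. Qed.
Lemma ispzD h1 h2 : ispz h1 -> ispz h2 -> ispz (fun z => h1 z + h2 z).
Proof. by move=> [P HP] [Q HQ]; exists (P + Q) => z; rewrite hornerD HP HQ. Qed.
Lemma ispzM h1 h2 : ispz h1 -> ispz h2 -> ispz (fun z => h1 z * h2 z).
Proof. by move=> [P HP] [Q HQ]; exists (P * Q) => z; rewrite hornerM HP HQ. Qed.
Lemma ispzE h k : ispz h -> ispz (fun z => h z ^+ k).
Proof. by move=> [P HP]; exists (P ^+ k) => z; rewrite horner_exp HP. Qed.

Lemma ispz_sum (I : Type) (r : seq I) (F : I -> CC -> CC) :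
  (forall i, ispz (F i)) -> ispz (fun z => \sum_(i <- r) F i z).
Proof.
move=> H; elim: r => [|a r IH].
  by apply: (ispz_ext _ (ispzC 0)) => z; rewrite big_nil.
by apply: (ispz_ext _ (ispzD (H a) IH)) => z; rewrite big_cons.
Qed.
Lemma ispz_prod (I : Type) (r : seq I) (F : I -> CC -> CC) :
  (forall i, ispz (F i)) -> ispz (fun z => \prod_(i <- r) F i z).
Proof.
move=> H; elim: r => [|a r IH].
  by apply: (ispz_ext _ (ispzC 1)) => z; rewrite big_nil.
by apply: (ispz_ext _ (ispzM (H a) IH)) => z; rewrite big_cons.
Qed.

Lemma ispz_meval k (f : {mpoly CC[k]}) (h : 'I_k -> CC -> CC) :
  (forall i, ispz (h i)) -> ispz (fun z => f.@[fun i => h i z]).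
Proof.
move=> H.
have HS : ispz (fun z => \sum_(m <- msupp f) f@_m * \prod_(i < k) h i z ^+ m i).
  apply: ispz_sum => m; apply: ispzM; first exact: ispzC.
  by apply: ispz_prod => i; apply: ispzE.
by apply: (ispz_ext _ HS) => z; rewrite mevalE.
Qed.

Definition upd (K : eqType) (p : K -> CC) k z := fun j => if j == k then z else p j.
Definition posr (c : CC) := exists r : R, 0 < r /\ c = toC r.

Lemma density (K : finType) (F : (K -> CC) -> CC) :
  (forall p k, ispz (fun z => F (upd p k z))) ->
  (forall p, (forall k, posr (p k)) -> F p = 0) -> forall p, F p = 0.
Proof.
move=> Hl H0.
suff aux : forall m (A : {set K}), #|A| = m ->
    forall p, (forall k, k \notin A -> posr (p k)) -> F p = 0.
  by move=> p; apply: (aux _ setT erefl) => k; rewrite inE.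
elim=> [|m IH] A hA p hp.
  by apply: H0 => k; apply: hp; move/eqP: hA; rewrite cards_eq0 => /eqP ->; rewrite inE.
have : leq 1 #|A| by rewrite hA.
rewrite card_gt0 => /set0Pn [k kA].
have hA' : #|A :\ k| = m by move: hA; rewrite (cardsD1 k A) kA add1n => -[].
have [Q HQ] := Hl p k.
have Q0 : Q = 0.
  apply: poly_pos0 => r r0; rewrite -HQ; apply: (IH _ hA') => j.
  rewrite /upd !inE negb_and negbK; case: eqP => [_ _|_ /= /hp //].
  by exists r.
have -> : p = upd p k (p k) by apply: functional_extensionality => j; rewrite /upd; case: eqP => // ->.
by rewrite HQ Q0 horner0.
Qed.
From mathcomp Require Import ring lra.

Section Main.
Variable n : nat.

Definition Kn := (bool + (bool * bool * 'I_n))%type.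

Definition xfun (p : Kn -> CC) : cvec n :=
  fun v => \sum_(s : bool) p (inl s) * \prod_(i < n) p (inr (s, v i, i)).

Lemma xfun_ispz (f : cpoly n) p k :
  ispz (fun z => peval f (xfun (upd p k z))).
Proof.
apply: ispz_meval => i; apply: ispz_sum => s; apply: ispzM.
  rewrite /upd; case: eqP => _; [exact: ispzX | exact: ispzC].
apply: ispz_prod => j; rewrite /upd; case: eqP => _; [exact: ispzX | exact: ispzC].
Qed.

Lemma unnorm_gt0 (beta omega : 'I_n -> R) gamma v :
  (forall i, 0 < beta i) -> (forall i, 0 < omega i) -> 0 < gamma ->
  0 < rbm_unnorm beta omega gamma v.
Proof.
move=> hb ho hg; rewrite /rbm_unnorm; apply: mulr_gt0.
  by apply: prodr_gt0 => i _; apply: exprn_gt0.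
have h : 0 <= gamma * \prod_(i < n) omega i ^+ v i.
  by apply: mulr_ge0; [exact: ltW | apply: prodr_ge0 => i _; apply: exprn_ge0; apply: ltW].
by apply: (lt_le_trans ltr01); rewrite lerDl.
Qed.

Lemma Z_gt0 (beta omega : 'I_n -> R) gamma :
  (forall i, 0 < beta i) -> (forall i, 0 < omega i) -> 0 < gamma ->
  0 < \sum_(u : bitvec n) rbm_unnorm beta omega gamma u.
Proof.
move=> hb ho hg; rewrite (bigD1 [ffun _ => false]) //=.
have h1 := unnorm_gt0 [ffun _ => false] hb ho hg.
have h2 : 0 <= \sum_(i | i != [ffun _ => false]) rbm_unnorm beta omega gamma i.
  by apply: sumr_ge0 => u _; apply: ltW; apply: unnorm_gt0.
by apply: (lt_le_trans h1); rewrite lerDl.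
Qed.

End Main.
Section Main2.
Variable n : nat.

Lemma toC_sum (I : Type) (r : seq I) (F : I -> R) :
  toC (\sum_(i <- r) F i) = \sum_(i <- r) toC (F i).
Proof. by rewrite /toC rmorph_sum. Qed.
Lemma toC_prod (I : Type) (r : seq I) (F : I -> R) :
  toC (\prod_(i <- r) F i) = \prod_(i <- r) toC (F i).
Proof. by rewrite /toC rmorph_prod. Qed.
Lemma toC_eq0 x : (toC x == 0) = (x == 0).
Proof. by rewrite /toC fmorph_eq0. Qed.

Lemma prod_split (a1 a2 : 'I_n -> R) (v : bitvec n) :
  (forall i, a1 i != 0) ->
  \prod_(i < n) (if v i then a2 i else a1 i) =
  (\prod_(i < n) a1 i) * \prod_(i < n) (a2 i / a1 i) ^+ v i.
Proof.
move=> h; rewrite -big_split; apply: eq_bigr => i _ /=.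
by case: (v i); rewrite ?expr1 ?expr0 ?mulr1 // mulrC divfK.
Qed.

Lemma alg_id (P1 P2 P3 P4 Z l m : R) : Z != 0 -> P2 != 0 -> l != 0 ->
  m * (P1 * (P3 * P4)) + l * (P2 * P3) =
  l * P2 * Z * (P3 * (1 + m * P1 / (l * P2) * P4) / Z).
Proof. move=> h1 h2 h3; field. by rewrite h1 h2 h3. Qed.

Lemma base_case (f : cpoly n) (r : Kn n -> R) :
  (forall k, 0 < r k) ->
  (forall y, cone_of_real (@rbm_model n) y -> peval f y = 0) ->
  peval f (xfun (fun k => toC (r k))) = 0.
Proof.
move=> hr H.
pose lam := r (inl false); pose mu := r (inl true).
pose a1 i := r (inr (false, false, i)); pose a2 i := r (inr (false, true, i)).
pose b1 i := r (inr (true, false, i)); pose b2 i := r (inr (true, true, i)).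
pose beta i := a2 i / a1 i.
pose omega i := (b2 i / b1 i) / beta i.
pose gamma := mu * \prod_(i < n) b1 i / (lam * \prod_(i < n) a1 i).
pose L := lam * \prod_(i < n) a1 i.
have hbeta : forall i, 0 < beta i by move=> i; apply: divr_gt0; apply: hr.
have homega : forall i, 0 < omega i by move=> i; apply: divr_gt0 => //; apply: divr_gt0; apply: hr.
have hL : 0 < L by apply: mulr_gt0; [apply: hr | apply: prodr_gt0 => i _; apply: hr].
have hgamma : 0 < gamma.
  by apply: divr_gt0 => //; apply: mulr_gt0; [apply: hr | apply: prodr_gt0 => i _; apply: hr].
pose Z := \sum_(u : bitvec n) rbm_unnorm beta omega gamma u.
have hZ : 0 < Z by apply: Z_gt0.
apply: H; exists (rbm_point beta omega gamma), (toC (L * Z)); split.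
  by exists beta, omega, gamma.
split; first by rewrite toC_eq0 gt_eqF //; apply: mulr_gt0.
apply: functional_extensionality => v.
rewrite /xfun big_bool /= -toCM; rewrite /toC -!rmorph_prod -!rmorphM -rmorphD.
congr (_%:C)%C.
have e1 : forall c : bool, \prod_(i < n) r (inr (c, v i, i)) =
   \prod_(i < n) (if v i then r (inr (c, true, i)) else r (inr (c, false, i))).
  by move=> c; apply: eq_bigr => i _; case: (v i).
rewrite !e1 /rbm_point -/Z /rbm_unnorm.
rewrite (@prod_split a1 a2) ?(@prod_split b1 b2); try by move=> i; apply/negbT/gt_eqF; apply: hr.
have -> : \prod_(i < n) (b2 i / b1 i) ^+ v i =
   \prod_(i < n) beta i ^+ v i * \prod_(i < n) omega i ^+ v i.
  rewrite -big_split; apply: eq_bigr => i _ /=; rewrite -exprMn /omega; rewrite [beta i * _]mulrC divfK //.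
  by apply/negbT/gt_eqF.
rewrite /gamma /L -/a1 -/b1 -/lam -/mu.
have hZ0 : Z != 0 by apply/negbT/gt_eqF.
have hA : \prod_(i < n) a1 i != 0 by apply/negbT/gt_eqF; apply: prodr_gt0 => i _; apply: hr.
have hl : lam != 0 by apply/negbT/gt_eqF; apply: hr.
have -> : \prod_(i < n) (a2 i / a1 i) ^+ v i = \prod_(i < n) beta i ^+ v i by [].
move: hZ0 hA hl; rewrite -/Z.
generalize (\prod_(i < n) b1 i) (\prod_(i < n) a1 i) (\prod_(i < n) beta i ^+ v i)
  (\prod_(i < n) omega i ^+ v i) Z lam mu => P1 P2 P3 P4 Z' l m h1 h2 h3.
exact: alg_id.
Qed.

End Main2.
Section Main3.
Variable n : nat.

Lemma dirB (f : cpoly n) :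
  (forall y, cone_of_real (@rbm_model n) y -> peval f y = 0) ->
  forall x, secant_union x -> peval f x = 0.
Proof.
move=> H x [_ [s [t [[a [_ ->]] [[b [_ ->]] [_ [l [m ->]]]]]]]].
have all0 : forall p : Kn n -> CC, peval f (xfun p) = 0.
  apply: density; first by move=> p k; apply: xfun_ispz.
  move=> p hp.
  have [r hr] : exists r : Kn n -> R, forall k, 0 < r k /\ p k = toC (r k).
    exists (fun k => projT1 (constructive_indefinite_description _ (hp k))).
    by move=> k; case: (constructive_indefinite_description _ (hp k)).
  have -> : p = (fun k => toC (r k)).
    by apply: functional_extensionality => k; case: (hr k).
  by apply: base_case => // k; case: (hr k).
pose p : Kn n -> CC := fun k => match k with
  | inl c => if c then m else l
  | inr (c, e, i) => if c then (if e then (b i).2 else (b i).1)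
                     else (if e then (a i).2 else (a i).1) end.
rewrite -(all0 p); congr peval; apply: functional_extensionality => v.
by rewrite /xfun big_bool /= addrC.
Qed.

Definition segC (beta : 'I_n -> R) : cvec n :=
  fun v => \prod_(i < n) (if v i then toC (beta i) else 1).

Lemma segC_cone beta : segre_cone (segC beta).
Proof.
exists (fun i => (1, toC (beta i))); split.
  by move=> i; rewrite xpair_eqE oner_eq0.
by [].
Qed.

Lemma segC_val beta v : segC beta v = toC (\prod_(i < n) beta i ^+ v i).
Proof.
rewrite toC_prod; apply: eq_bigr => i _.
by case: (v i); rewrite ?expr1 ?expr0 /toC ?rmorph1.
Qed.

Lemma segC_e beta j : segC beta [ffun i => i == j] = toC (beta j).
Proof.
rewrite /segC (bigD1 j) //= ffunE eqxx big1 ?mulr1 // => i /negbTE hi.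
by rewrite ffunE hi.
Qed.

Lemma segC_0 beta : segC beta [ffun _ => false] = 1.
Proof. by rewrite /segC big1 // => i _; rewrite ffunE. Qed.

Lemma nonprop beta beta' j : beta j != beta' j ->
  ~ exists d : CC, forall v, segC beta v = d * segC beta' v.
Proof.
move=> ne [d Hd].
have := Hd [ffun _ => false]; rewrite !segC_0 mulr1 => d1.
have := Hd [ffun i => i == j]; rewrite !segC_e -d1 mul1r => /toC_inj e.
by move: ne; rewrite e eqxx.
Qed.

Lemma alg2 (P Q g Z : R) : Z != 0 -> P * (1 + g * Q) / Z = 1 / Z * P + g / Z * (P * Q).
Proof. by move=> h; field. Qed.
Lemma alg3 (P g Z : R) : Z != 0 -> P * (1 + g * 1) / Z = (1 + g) / Z * P.
Proof. by move=> h; field. Qed.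

Lemma dirA (hn : leq 1 n) x : cone_of_real (@rbm_model n) x -> secant_union x.
Proof.
move=> [q [c [[beta [omega [gamma [hb [ho [hg ->]]]]]] [hc ->]]]].
pose Z := \sum_(u : bitvec n) rbm_unnorm beta omega gamma u.
have hZ : 0 < Z by apply: Z_gt0.
split.
  exists [ffun _ => false]; rewrite mulf_neq0 // toC_eq0 /rbm_point.
  by apply/negbT/gt_eqF; apply: divr_gt0 => //; apply: unnorm_gt0.
have split_prod : forall v : bitvec n, \prod_(i < n) (beta i * omega i) ^+ v i =
    \prod_(i < n) beta i ^+ v i * \prod_(i < n) omega i ^+ v i.
  by move=> v; rewrite -big_split; apply: eq_bigr => i _; rewrite exprMn.
case: (boolP [exists i, omega i != 1]) => [/existsP [j hj] | hall].
  exists (segC beta), (segC (fun i => beta i * omega i)).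
  split; first exact: segC_cone.
  split; first exact: segC_cone.
  split.
    apply: (@nonprop _ _ j); apply: contra hj => /eqP e.
    have hbj : beta j != 0 by apply/negbT/gt_eqF.
    by apply/eqP; apply: (mulfI hbj); rewrite -e mulr1.
  exists (c * toC (1 / Z)), (c * toC (gamma / Z)).
  apply: functional_extensionality => v.
  rewrite !segC_val -!mulrA -!toCM -[c * _ + _]mulrDr -toCD split_prod.
  congr (c * toC _); rewrite /rbm_point /rbm_unnorm -/Z.
  by apply: alg2; apply/negbT/gt_eqF.
exists (segC beta), (segC (fun i => beta i * 2)).
split; first exact: segC_cone.
split; first exact: segC_cone.
have ho1 : forall i, omega i = 1.
  by move=> i; apply/eqP; move/existsPn: hall => /(_ i); rewrite negbK.
split.
  apply: (@nonprop _ _ (Ordinal hn)).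
  have hbj : 0 < beta (Ordinal hn) by [].
  apply/negP => /eqP e.
  have : beta (Ordinal hn) * 1 = beta (Ordinal hn) * 2 by rewrite mulr1.
  move/(mulfI (negbT (gt_eqF hbj)))/eqP.
  by rewrite eq_sym -subr_eq0 (_ : 2 - 1 = 1 :> R) ?oner_eq0 // addrK.
exists (c * toC ((1 + gamma) / Z)), 0.
apply: functional_extensionality => v.
rewrite mul0r addr0 segC_val -mulrA -toCM.
congr (c * toC _); rewrite /rbm_point /rbm_unnorm -/Z.
have -> : \prod_(i < n) omega i ^+ v i = 1 by rewrite big1 // => i _; rewrite ho1 expr1n.
by apply: alg3; apply/negbT/gt_eqF.
Qed.

End Main3.
Delimit Scope nat_scope with N.

Theorem corollary3p2 (n : nat) (hn : (1 <= n)%N) :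
  (forall x : cvec n, rbm_variety x <-> secant_variety x) /\
  (forall w : bitvec n -> R,
     tropicalization (@rbm_variety n) w <-> tropicalization (@secant_variety n) w).
Proof.
have eqv : forall x : cvec n, rbm_variety x <-> secant_variety x.
  move=> x; split => -[nz H]; split => // f hf Hf; apply: H => //.
    by move=> y /(dirA hn); apply: Hf.
  exact: dirB.
split => // w; split => H f Hf; apply: H => x /eqv; exact: Hf.
Qed.
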